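(* In the fixed-flow two-parallel-path setting with $l_{P_1}<l_{P_2}$, for every integer $t\ge L$ we have $r_{ss_1}(t+1)>r_{\min}(t)$. More precisely, $r_{ss_1}(t+1)=r_{\min}(t)\gamma_s(t)$ with $$\gamma_s(t)=\frac{a(t)p_{ss_2}(t)+a(t)f_{ss_2}(t)+(1-l_{P_1})\,\beta(t)\,b_{d_2d}(t-n+1)}{p_{ss_2}(t)+f_{ss_2}(t)+(1-l_{P_2})\,b_{d_2d}(t-n+1)}>1,$$ where $a(t)=r_{ss_1}(t)/r_{\min}(t)\ge1$ and $\beta(t)=\dfrac{b_{d_1d}(t-m+1)}{b_{d_2d}(t-n+1)\,r_{\min}(t)}\ge1$.
   Context: Model (linear decision rule). Directed graph $G=(V,E)$, source $s$, destination $d$, discrete time; pheromone $p_{uv}(t)$, forward flows $f_v(t)$, backward flows $b_v(t)$; leakages $l_v\in[0,1]$; decay $\delta\in(0,1)$; exogenous inputs $f_s(t),b_d(t)$. Edge flows: $f_{uv}(t)=f_u(t)p_{uv}(t)/\sum_{z:(u,z)\in E}p_{uz}(t)$, $b_{uv}(t)=b_v(t)p_{uv}(t)/\sum_{z:(z,v)\in E}p_{zv}(t)$ (at a vertex with a single outgoing, resp. incoming, edge the whole flow goes along it). Updates: $f_v(t+1)=(1-l_v)\sum_{z:(z,v)\in E}f_{zv}(t)$ for $v\neq s$, $b_u(t+1)=(1-l_u)\sum_{z:(u,z)\in E}b_{uz}(t)$ for $u\ne d$, $p_{uv}(t+1)=\delta(p_{uv}(t)+f_{uv}(t)+b_{uv}(t))$.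 Path leakage $l_P=1-\prod_{v\in P\setminus\{s,d\}}(1-l_v)$. Two parallel paths: $G$ is the union of directed paths $P_1,P_2$ from $s$ to $d$ sharing only $s,d$; $s_1,s_2$ are the successors of $s$ and $d_1,d_2$ the predecessors of $d$ on $P_1,P_2$; $m=\mathrm{len}(P_1)$, $n=\mathrm{len}(P_2)$ (numbers of edges), $L=\max(m,n)$. Potential: $r_{ss_1}(t)=p_{ss_1}(t)/p_{ss_2}(t)$, $r_{d_1d}(t)=p_{d_1d}(t)/p_{d_2d}(t)$, and for $t\ge L$, $r_{\min}(t)=\min\{r_{ss_1}(t-i),\,r_{d_1d}(t-i):0\le i\le L-1\}$. Fixed-flow setting: $f_s(t)=\bar f>0$ and $b_d(t)=\bar b>0$ for all $t$, and all initial pheromone levels $p_{uv}(0)$ are positive. *)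

(* Defs.v *)
From HB Require Import structures.
From mathcomp Require Import all_boot all_order all_algebra.
Set Implicit Arguments. Unset Strict Implicit. Unset Printing Implicit Defensive.
Import Order.TTheory GRing.Theory Num.Theory.
Local Open Scope ring_scope.

Section Model.
Variables (R : realFieldType) (V : finType) (E : rel V) (s d : V).
Variables (l : V -> R) (delta : R) (fs bd : nat -> R).

Record state := State { pher : V -> V -> R; fflow : V -> R; bflow : V -> R }.

Definition fedge (S : state) (u v : V) : R :=
  fflow S u * pher S u v / \sum_(z | E u z) pher S u z.

Definition bedge (S : state) (u v : V) : R :=
  bflow S v * pher S u v / \sum_(z | E z v) pher S z v.

Definition step (t : nat) (S : state) : state :=
  State (fun u v => delta * (pher S u v + fedge S u v + bedge S u v))
        (fun v => if v == s then fs t.+1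
                  else (1 - l v) * \sum_(z | E z v) fedge S z v)
        (fun u => if u == d then bd t.+1
                  else (1 - l u) * \sum_(z | E u z) bedge S u z).

Variables (p0 : V -> V -> R) (f0 b0 : V -> R).

Definition init : state :=
  State p0 (fun v => if v == s then fs 0 else f0 v)
           (fun u => if u == d then bd 0 else b0 u).

Fixpoint traj (t : nat) : state :=
  match t with 0 => init | t'.+1 => step t' (traj t') end.

End Model.

Definition edges_of (T : eqType) (P : seq T) : seq (T * T) := zip P (behead P).

(* G is the union of the directed paths P1 = s :: q1 ++ [d] and P2 = s :: q2 ++ [d]
   (q1, q2 = internal vertices), sharing only s and d. *)
Definition two_parallel_paths (V : finType) (E : rel V) (s d : V) (q1 q2 : seq V) : Prop :=
  [/\ uniq (s :: d :: q1 ++ q2),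
      (0 < size q1 + size q2)%N,
      (forall v : V, v \in s :: d :: q1 ++ q2) &
      (forall u v : V, E u v = ((u, v) \in edges_of (s :: rcons q1 d))
                            || ((u, v) \in edges_of (s :: rcons q2 d)))].

Definition path_leak (R : pzRingType) (V : Type) (l : V -> R) (q : seq V) : R :=
  1 - \prod_(v <- q) (1 - l v).

Definition rmin_window (R : realFieldType) (r1 r2 : nat -> R) (L t : nat) : R :=
  \big[Order.min/r1 t]_(i < L) Order.min (r1 (t - i)%N) (r2 (t - i)%N).

(* Main.v *)
Require Import Defs.
From HB Require Import structures.
From mathcomp Require Import all_boot all_order all_algebra.
From mathcomp Require Import ring lra zify.
Import Order.TTheory GRing.Theory Num.Theory.
Local Open Scope ring_scope.


Lemma edgesP (T : eqType) (x0 : T) (P : seq T) u v :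
  reflect (exists2 i, (i.+1 < size P)%N & (u == nth x0 P i) && (v == nth x0 P i.+1))
          ((u, v) \in edges_of P).
Proof.
rewrite /edges_of; apply: (iffP idP).
  elim: P => [|x [|y P] IH] //= H.
  rewrite in_cons in H; case/orP: H => [/eqP [-> ->]|H].
    by exists 0%N => //=; rewrite !eqxx.
  case: (IH H) => i Hi Hu; exists i.+1 => //.
move=> [i]; elim: P i => [|x [|y P] IH] [|i] //= Hi H.
  by case/andP: H => /eqP -> /eqP ->; rewrite mem_head.
by rewrite in_cons (IH i Hi H) orbT.
Qed.

Section Struct.
Variables (V : finType) (E : rel V) (s d : V) (q q' : seq V).
Hypothesis HG : two_parallel_paths E s d q q'.
Local Notation P1 := (s :: rcons q d).
Local Notation P2 := (s :: rcons q' d).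
Local Notation x j := (nth d P1 j).

Lemma tpp_sym : two_parallel_paths E s d q' q.
Proof.
case: HG => U S C Ed.
have Hp : perm_eq (s :: d :: q ++ q') (s :: d :: q' ++ q) by rewrite !perm_cons perm_catC.
split.
- by rewrite -(perm_uniq Hp).
- by rewrite addnC.
- by move=> v; rewrite -(perm_mem Hp).
- by move=> u v; rewrite Ed orbC.
Qed.

Lemma U_all : [/\ s != d, s \notin q, s \notin q', d \notin q &
   (d \notin q') /\ forall y, y \in q -> y \notin q'].
Proof.
case: HG => U _ _ _; move: U; rewrite !cons_uniq !inE !mem_cat cat_uniq.
case/andP=> /norP[sd /norP[sq sq']] /andP[/norP[dq dq'] /and3P[_ H _]].
split=> //; split=> // y yq; apply/negP=> yq'; move/hasPn: H => /(_ y yq'). by rewrite yq.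
Qed.

Lemma U1 : uniq P1.
Proof.
case: HG => U _ _ _; move: U; rewrite !cons_uniq !inE !mem_cat cat_uniq rcons_uniq mem_rcons !inE.
by case/andP=> /norP[sd /norP[sq sq']] /andP[/norP[dq dq'] /and3P[-> _ _]]; rewrite (negbTE sd) (negbTE sq) dq.
Qed.

Lemma size_P1 : size P1 = (size q).+2.
Proof. by rewrite /= size_rcons. Qed.

Lemma x_int j : (0 < j <= size q)%N -> x j = nth d q j.-1.
Proof.
by case: j => //= j Hj; rewrite nth_rcons Hj.
Qed.

Lemma x_in j : (0 < j <= size q)%N -> x j \in q.
Proof. by move=> Hj; rewrite x_int // mem_nth //; case: j Hj. Qed.

Lemma x_notP2 j : (0 < j <= size q)%N -> x j \notin P2.
Proof.
move=> /x_in H; case: U_all => sd sq sq' dq [dq' D].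
rewrite inE mem_rcons inE negb_or; apply/andP; split.
  by apply: contra sq => /eqP <-.
rewrite negb_or D // andbT; by apply: contra dq => /eqP <-.
Qed.

Lemma nth_notP2 i : (i < size P2)%N -> x 0 = x 0 -> nth d P2 i \in P2.
Proof. by move=> Hi _; rewrite mem_nth. Qed.

Lemma pred_int j : (0 < j <= size q)%N -> forall z, E z (x j) = (z == x j.-1).
Proof.
move=> Hj z; case: HG => _ _ _ Ed; rewrite Ed.
have -> : ((z, x j) \in edges_of P2) = false.
  apply/negP => /(edgesP _ d)[i Hi /andP[_ /eqP H]].
  by move: (@x_notP2 _ Hj); rewrite H mem_nth.
rewrite orbF; apply/(edgesP _ d)/eqP.
  case=> i Hi /andP[/eqP -> /eqP H].
  have : (nth d P1 j == nth d P1 i.+1) by rewrite H.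
  have Hj2 : (j < size P1)%N by rewrite size_P1; case/andP: Hj => _ Hj; rewrite ltnS ltnW.
  by rewrite nth_uniq ?U1 // => /eqP ->.
move=> ->; exists j.-1; first by rewrite size_P1; case: j Hj => //= j Hj; rewrite ltnS ltnW.
by rewrite eqxx /=; case: j Hj.
Qed.

Lemma succ_int j : (0 < j <= size q)%N -> forall z, E (x j) z = (z == x j.+1).
Proof.
move=> Hj z; case: HG => _ _ _ Ed; rewrite Ed.
have -> : ((x j, z) \in edges_of P2) = false.
  apply/negP => /(edgesP _ d)[i Hi /andP[/eqP H _]].
  by move: (@x_notP2 _ Hj); rewrite H mem_nth // ltnW.
rewrite orbF; apply/(edgesP _ d)/eqP.
  case=> i Hi /andP[/eqP H /eqP ->].
  have Hj2 : (j < size P1)%N by rewrite size_P1; case/andP: Hj => _ Hj; rewrite ltnS ltnW.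
  have Hi2 : (i < size P1)%N by apply: ltnW.
  by move/eqP: H; rewrite nth_uniq ?U1 // => /eqP ->.
move=> ->; exists j; first by rewrite size_P1; case/andP: Hj.
by rewrite !eqxx.
Qed.

Lemma x_last : x (size q) = last s q.
Proof.
rewrite -rcons_cons nth_rcons /= ltnSn.
by rewrite -[X in nth _ _ X]/((size (s :: q)).-1) nth_last.
Qed.

Lemma x_end : x (size q).+1 = d.
Proof. by rewrite /= nth_rcons ltnn eqxx. Qed.

Lemma x_one : x 1 = head d q.
Proof. by case: q. Qed.

Lemma edge_into_d z : ((z, d) \in edges_of P1) = (z == last s q).
Proof.
have Hs : ((size q).+1 < size P1)%N by rewrite size_P1.
apply/(edgesP _ d)/eqP.
  case=> i Hi /andP[/eqP -> /eqP H].
  have Hi2 : (i.+1 < size P1)%N by [].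
  have : (nth d P1 (size q).+1 == nth d P1 i.+1) by rewrite x_end -H.
  by rewrite nth_uniq ?U1 // => /eqP [<-]; rewrite x_last.
move=> ->; exists (size q) => //; by rewrite x_last x_end !eqxx.
Qed.

Lemma edge_from_s z : ((s, z) \in edges_of P1) = (z == head d q).
Proof.
have Hs : (0 < size P1)%N by rewrite size_P1.
apply/(edgesP _ d)/eqP.
  case=> i Hi /andP[/eqP H /eqP ->].
  have Hi2 : (i < size P1)%N by apply: ltnW.
  have : (nth d P1 0 == nth d P1 i) by rewrite -H.
  by rewrite nth_uniq ?U1 // => /eqP <-; rewrite x_one.
move=> ->; exists 0%N; first by rewrite size_P1.
by rewrite x_one !eqxx.
Qed.

Lemma x_neq j : (0 < j <= size q)%N -> (x j != s) && (x j != d).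
Proof.
move=> /x_in H; case: U_all => sd sq sq' dq [dq' D].
by apply/andP; split; [apply: contra sq|apply: contra dq] => /eqP <-.
Qed.
End Struct.

Section Struct2.
Variables (V : finType) (E : rel V) (s d : V) (q1 q2 : seq V).
Hypothesis HG : two_parallel_paths E s d q1 q2.

Lemma last_in (T : eqType) (x : T) q : q != [::] -> last x q \in q.
Proof. by case: q => // y r _; rewrite /= mem_last. Qed.
Lemma head_in (T : eqType) (x : T) q : q != [::] -> head x q \in q.
Proof. by case: q => // y r _; rewrite /= mem_head. Qed.

Lemma last_neq : last s q1 != last s q2.
Proof.
case: (@U_all V E s d q1 q2 HG) => sd sq sq' dq [dq' D].
case: HG => _ Hsz _ _.
have [e1|n1] := eqVneq q1 [::]; have [e2|n2] := eqVneq q2 [::].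
- by move: Hsz; rewrite e1 e2.
- rewrite e1 /=; apply/eqP => H; move: (@last_in _ s _ n2); rewrite -H.
  by rewrite (negbTE sq').
- rewrite e2 /=; apply/eqP => H; move: (@last_in _ s _ n1); rewrite H.
  by rewrite (negbTE sq).
- apply/eqP => H; move: (D _ (@last_in _ s _ n1)); by rewrite H (@last_in _ s _ n2).
Qed.

Lemma head_neq : head d q1 != head d q2.
Proof.
case: (@U_all V E s d q1 q2 HG) => sd sq sq' dq [dq' D].
case: HG => _ Hsz _ _.
have [e1|n1] := eqVneq q1 [::]; have [e2|n2] := eqVneq q2 [::].
- by move: Hsz; rewrite e1 e2.
- rewrite e1 /=; apply/eqP => H; move: (@head_in _ d _ n2); rewrite -H.
  by rewrite (negbTE dq').
- rewrite e2 /=; apply/eqP => H; move: (@head_in _ d _ n1); rewrite H.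
  by rewrite (negbTE dq).
- apply/eqP => H; move: (D _ (@head_in _ d _ n1)); by rewrite H (@head_in _ d _ n2).
Qed.

Lemma Ed_d z : E z d = (z == last s q1) || (z == last s q2).
Proof.
case: (HG) => _ _ _ Ed.
by rewrite Ed (@edge_into_d V E s d q1 q2 HG) (@edge_into_d V E s d q2 q1 (@tpp_sym V E s d q1 q2 HG)).
Qed.

Lemma Es z : E s z = (z == head d q1) || (z == head d q2).
Proof.
case: (HG) => _ _ _ Ed.
by rewrite Ed (@edge_from_s V E s d q1 q2 HG) (@edge_from_s V E s d q2 q1 (@tpp_sym V E s d q1 q2 HG)).
Qed.
End Struct2.

Section Dyn.
Variables (R : realFieldType) (V : finType) (E : rel V) (s d : V).
Variables (l : V -> R) (delta fbar bbar : R) (p0 : V -> V -> R) (f0 b0 : V -> R).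
Hypothesis Hl : forall v, 0 <= l v <= 1.
Hypothesis Hdel : 0 < delta < 1.
Hypothesis Hf : 0 < fbar.
Hypothesis Hb : 0 < bbar.
Hypothesis Hp0 : forall u v, E u v -> 0 < p0 u v.
Hypothesis Hf0 : forall v, 0 <= f0 v.
Hypothesis Hb0 : forall v, 0 <= b0 v.
Local Notation T := (traj E s d l delta (fun _ => fbar) (fun _ => bbar) p0 f0 b0).

Lemma bflow_succ k u : bflow (T k.+1) u =
  if u == d then bbar else (1 - l u) * \sum_(z | E u z) bedge E (T k) u z.
Proof. by []. Qed.

Lemma fflow_s k : fflow (T k) s = fbar.
Proof. by case: k => [|k] /=; rewrite eqxx. Qed.

Lemma bflow_d k : bflow (T k) d = bbar.
Proof. by case: k => [|k] /=; rewrite eqxx. Qed.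

Lemma pos k : (forall u v, E u v -> 0 < pher (T k) u v) /\
   (forall v, 0 <= fflow (T k) v) /\ (forall v, 0 <= bflow (T k) v).
Proof.
have l1 : forall v, 0 <= 1 - l v by move=> v; case/andP: (Hl v) => _ H; rewrite subr_ge0.
elim: k => [|k [Hp [Hff Hbb]]].
  split; first exact: Hp0.
  split=> v /=; case: ifP => _; [exact: ltW | exact: Hf0 | exact: ltW | exact: Hb0].
have Hfe : forall u v, E u v -> 0 <= fedge E (T k) u v.
  move=> u v Huv; rewrite /fedge; apply: divr_ge0; first by rewrite mulr_ge0 ?Hff ?Hbb // ltW // Hp.
  by apply: sumr_ge0 => z Hz; rewrite ltW // Hp.
have Hbe : forall u v, E u v -> 0 <= bedge E (T k) u v.
  move=> u v Huv; rewrite /bedge; apply: divr_ge0; first by rewrite mulr_ge0 ?Hff ?Hbb // ltW // Hp.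
  by apply: sumr_ge0 => z Hz; rewrite ltW // Hp.
split.
  move=> u v Huv /=; case/andP: Hdel => H0 _; rewrite mulr_gt0 //.
  by rewrite -addrA ltr_wpDr ?addr_ge0 ?Hfe ?Hbe ?Hp.
split=> v /=; case: ifP => _; try (by apply: ltW);
  apply: mulr_ge0 => //; apply: sumr_ge0 => z Hz; [exact: Hfe | exact: Hbe].
Qed.

Lemma chain q q' (HG : two_parallel_paths E s d q q') t : (size q <= t)%N ->
  bedge E (T t) s (head d q) =
  (\prod_(v <- q) (1 - l v)) * bedge E (T (t - size q)) (last s q) d.
Proof.
pose x j := nth d (s :: rcons q d) j.
have Pi := @pred_int V E s d q q' HG.
have Su := @succ_int V E s d q q' HG.
have Ne := @x_neq V E s d q q' HG.
suff H : forall i, (i <= size q)%N -> (i <= t)%N ->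
   bedge E (T t) s (head d q) =
   (\prod_(v <- take i q) (1 - l v)) * bedge E (T (t - i)) (x i) (x i.+1).
  move=> Ht; rewrite (H (size q)) // take_size.
  by rewrite /x x_last x_end.
elim=> [|i IH] Hi Ht.
  by rewrite take0 big_nil mul1r subn0 /x -(@x_one _ s).
rewrite IH; [|exact: ltnW|exact: ltnW]. rewrite (take_nth d) // big_rcons /= -mulrA; congr (_ * _).
have Hj : (0 < i.+1 <= size q)%N by [].
rewrite /bedge (eq_bigl _ _ (Pi _ Hj)) big_pred1_eq /= mulfK; last first.
  case: (pos (t - i)) => Hp _; rewrite gt_eqF // Hp // Pi //.
have -> : (t - i)%N = (t - i.+1).+1 by lia.
rewrite bflow_succ; case/andP: (Ne _ Hj) => _ /negbTE ->.
rewrite (eq_bigl _ _ (Su _ Hj)) big_pred1_eq.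
by rewrite /x (@x_int _ s d q _ Hj) /bedge.
Qed.
End Dyn.

Lemma sum2 (R : realFieldType) (V : finType) (P : pred V) (a b : V) (F : V -> R) :
  a != b -> (forall z, P z = (z == a) || (z == b)) ->
  \sum_(z | P z) F z = F a + F b.
Proof.
move=> ab HP; rewrite (bigD1 a) ?HP ?eqxx //; congr (_ + _).
apply: big_pred1 => z /=; rewrite HP.
by case: (eqVneq z a) => [->|za] /=; rewrite ?eqxx ?andbF ?andbT // (negbTE ab).
Qed.

Lemma alg (R : realFieldType) (bbar delta c2 c1 a2 a1 p2 p1 r f2 Pi2 Pi1 : R) :
  0 < bbar ->
  0 < delta ->
  0 < c2 ->
  0 < c1 ->
  0 < a2 ->
  0 < a1 ->
  0 < p2 ->
  0 < p1 ->
  r <= a1 / a2 ->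
  r <= c1 / c2 ->
  r <= p1 / p2 ->
  0 < r ->
  0 <= f2 ->
  Pi2 < Pi1 ->
  0 <= Pi1 ->
  0 <= Pi2 ->
  [/\ r <
      delta * (p1 + p1 / p2 * f2 + Pi1 * (bbar * a1 / (a1 + a2))) /
      (delta * (p2 + f2 + Pi2 * (bbar * c2 / (c1 + c2)))),
      delta * (p1 + p1 / p2 * f2 + Pi1 * (bbar * a1 / (a1 + a2))) /
      (delta * (p2 + f2 + Pi2 * (bbar * c2 / (c1 + c2)))) =
      r *
      ((p1 / p2 / r * p2 + p1 / p2 / r * f2 +
        Pi1 * (bbar * a1 / (a1 + a2) / (bbar * c2 / (c1 + c2) * r)) *
        (bbar * c2 / (c1 + c2))) /
       (p2 + f2 + Pi2 * (bbar * c2 / (c1 + c2)))),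
      1 <
      (p1 / p2 / r * p2 + p1 / p2 / r * f2 +
       Pi1 * (bbar * a1 / (a1 + a2) / (bbar * c2 / (c1 + c2) * r)) *
       (bbar * c2 / (c1 + c2))) /
      (p2 + f2 + Pi2 * (bbar * c2 / (c1 + c2))),
      1 <= p1 / p2 / r
    & 1 <= bbar * a1 / (a1 + a2) / (bbar * c2 / (c1 + c2) * r)].
Proof.
move=> Hb Hd Hc2 Hc1 Ha2 Ha1 Hp2 Hp1 ra rc rp Hr Hf2 Pil Pi1g Pi2g.
have Hb2 : 0 < bbar * c2 / (c1 + c2) by rewrite divr_gt0 ?mulr_gt0 ?addr_gt0.
have HB1 : 0 < bbar * a1 / (a1 + a2) by rewrite divr_gt0 ?mulr_gt0 ?addr_gt0.
have hbeta : 1 <= bbar * a1 / (a1 + a2) / (bbar * c2 / (c1 + c2) * r).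
  rewrite ler_pdivlMr; last exact: mulr_gt0.
  rewrite mul1r -subr_ge0.
  have -> : bbar * a1 / (a1 + a2) - bbar * c2 / (c1 + c2) * r =
     bbar * (a1 * (c1 - r * c2) + c2 * (a1 - r * a2)) / ((a1 + a2) * (c1 + c2)).
    field; rewrite ?gt_eqF ?addr_gt0 //.
  apply: divr_ge0; last by apply: mulr_ge0; apply: ltW; exact: addr_gt0.
  apply: mulr_ge0; first exact: ltW.
  apply: addr_ge0; (apply: mulr_ge0; first exact: ltW); by rewrite subr_ge0 -ler_pdivlMr.
have ha : 1 <= p1 / p2 / r by rewrite ler_pdivlMr // mul1r.
move: hbeta ha.
set A := p1 / p2 / r.
set Bt := bbar * a1 / (a1 + a2) / (bbar * c2 / (c1 + c2) * r).
move=> hbeta ha.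
set b2 := bbar * c2 / (c1 + c2).
have Hb2' : 0 < b2 by [].
have HPb : 0 <= Pi2 * b2 by apply: mulr_ge0 => //; exact: ltW.
have HD : 0 < p2 + f2 + Pi2 * b2 by lra.
have hg : 1 < (A * p2 + A * f2 + Pi1 * Bt * b2) / (p2 + f2 + Pi2 * b2).
  rewrite ltr_pdivlMr // mul1r.
  have h1 : 0 <= (A - 1) * (p2 + f2).
    by apply: mulr_ge0; [rewrite subr_ge0 | apply: addr_ge0 => //; exact: ltW].
  have h2 : 0 < (Pi1 * Bt - Pi2) * b2.
    apply: mulr_gt0 => //; rewrite subr_gt0; apply: lt_le_trans Pil _.
    by rewrite -{1}(mulr1 Pi1) ler_wpM2l.
  lra.
have heq : delta * (p1 + p1 / p2 * f2 + Pi1 * (bbar * a1 / (a1 + a2))) /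
      (delta * (p2 + f2 + Pi2 * b2)) =
      r * ((A * p2 + A * f2 + Pi1 * Bt * b2) / (p2 + f2 + Pi2 * b2)).
  have hc : 0 < c1 + c2 by lra.
  have ha' : 0 < a1 + a2 by lra.
  have t1 : 0 < (p2 + f2) * (c1 + c2) by apply: mulr_gt0 => //; lra.
  have t2 : 0 <= Pi2 * (bbar * c2) by apply: mulr_ge0 => //; apply: ltW; exact: mulr_gt0.
  have hN : 0 < (p2 + f2) * (c1 + c2) + Pi2 * (bbar * c2) by lra.
  rewrite /A /Bt /b2; field.
  by rewrite !gt_eqF.
split=> //.
by rewrite heq -{1}(mulr1 r) ltr_pM2l.
Qed.

Theorem mainTheorem7 (R : realFieldType) (V : finType) (E : rel V) (s d : V)
    (q1 q2 : seq V) (l : V -> R) (delta fbar bbar : R)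
    (p0 : V -> V -> R) (f0 b0 : V -> R) (t : nat) :
  two_parallel_paths E s d q1 q2 ->
  (forall v, 0 <= l v <= 1) ->
  0 < delta < 1 ->
  0 < fbar -> 0 < bbar ->
  (forall u v, E u v -> 0 < p0 u v) ->
  (forall v, 0 <= f0 v) -> (forall v, 0 <= b0 v) ->
  path_leak l q1 < path_leak l q2 ->
  let m := (size q1).+1 in
  let n := (size q2).+1 in
  let L := maxn m n in
  let s1 := head d q1 in let s2 := head d q2 in
  let d1 := last s q1 in let d2 := last s q2 in
  let T := traj E s d l delta (fun _ => fbar) (fun _ => bbar) p0 f0 b0 in
  let r_ss1 := fun k => pher (T k) s s1 / pher (T k) s s2 in
  let r_d1d := fun k => pher (T k) d1 d / pher (T k) d2 d in
  let r_min := rmin_window r_ss1 r_d1d L in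
  (L <= t)%N ->
  let a := r_ss1 t / r_min t in
  let b2 := bedge E (T (t - n + 1)%N) d2 d in
  let beta := bedge E (T (t - m + 1)%N) d1 d / (b2 * r_min t) in
  let gamma := (a * pher (T t) s s2 + a * fedge E (T t) s s2
                  + (1 - path_leak l q1) * beta * b2)
               / (pher (T t) s s2 + fedge E (T t) s s2 + (1 - path_leak l q2) * b2) in
  [/\ r_ss1 t.+1 > r_min t,
      r_ss1 t.+1 = r_min t * gamma,
      gamma > 1, a >= 1 & beta >= 1].
Proof.
move=> HG Hl Hdel Hf Hb Hp0 Hf0 Hb0 Hleak m n L s1 s2 d1 d2 T r1 r2 rm HLt a b2 beta gamma.
have HG' := @tpp_sym V E s d q1 q2 HG.
have P := @pos R V E s d l delta fbar bbar p0 f0 b0 Hl Hdel Hf Hb Hp0 Hf0 Hb0.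
have Es1 : E s s1 by rewrite (@Es V E s d q1 q2 HG) eqxx.
have Es2 : E s s2 by rewrite (@Es V E s d q1 q2 HG) eqxx orbT.
have Ed1 : E d1 d by rewrite (@Ed_d V E s d q1 q2 HG) eqxx.
have Ed2 : E d2 d by rewrite (@Ed_d V E s d q1 q2 HG) eqxx orbT.
have pp k u v : E u v -> 0 < pher (T k) u v by case: (P k) => H _; apply: H.
have Hm : (m <= t)%N by apply: leq_trans HLt; rewrite leq_maxl.
have Hn : (n <= t)%N by apply: leq_trans HLt; rewrite leq_maxr.
have C1 := @chain R V E s d l delta fbar bbar p0 f0 b0 Hl Hdel Hf Hb Hp0 Hf0 Hb0 q1 q2 HG t (ltnW Hm).
have C2 := @chain R V E s d l delta fbar bbar p0 f0 b0 Hl Hdel Hf Hb Hp0 Hf0 Hb0 q2 q1 HG' t (ltnW Hn).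
have lk q : 1 - path_leak l q = \prod_(v <- q) (1 - l v).
  by rewrite /path_leak opprB addrC subrK.
have k1 : (t - m + 1)%N = (t - size q1)%N by rewrite /m; lia.
have k2 : (t - n + 1)%N = (t - size q2)%N by rewrite /n; lia.
have Pi1ge : 0 <= \prod_(v <- q1) (1 - l v).
  by apply: prodr_ge0 => v _; case/andP: (Hl v) => _; rewrite subr_ge0.
have Pi2ge : 0 <= \prod_(v <- q2) (1 - l v).
  by apply: prodr_ge0 => v _; case/andP: (Hl v) => _; rewrite subr_ge0.
have Pilt : \prod_(v <- q2) (1 - l v) < \prod_(v <- q1) (1 - l v).
  by rewrite -!lk; lra.
rewrite /gamma /beta /b2 !lk.
have Hr : r1 t.+1 = (delta * (pher (T t) s s1 + fedge E (T t) s s1 + bedge E (T t) s s1))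
   / (delta * (pher (T t) s s2 + fedge E (T t) s s2 + bedge E (T t) s s2)) by [].
rewrite Hr C1 C2 -k1 -k2.
have Hf1 : fedge E (T t) s s1 = pher (T t) s s1 / pher (T t) s s2 * fedge E (T t) s s2.
  rewrite /fedge; field; apply/andP; split; last by rewrite gt_eqF // pp.
  rewrite (@sum2 R V _ s1 s2 _ (@head_neq V E s d q1 q2 HG) (@Es V E s d q1 q2 HG)).
  by rewrite gt_eqF // addr_gt0 // pp.
have f2ge : 0 <= fedge E (T t) s s2.
  rewrite /fedge divr_ge0 // ?mulr_ge0 //; first by case: (P t) => _ [H _]; apply: H.
    by rewrite ltW // pp.
  by apply: sumr_ge0 => z Hz; rewrite ltW // pp.
have Bd k u : bedge E (T k) u d = bbar * pher (T k) u d / (pher (T k) d1 d + pher (T k) d2 d).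
  rewrite /bedge (@bflow_d R V E s d l delta fbar bbar p0 f0 b0 k).
  by rewrite (@sum2 R V _ d1 d2 _ (@last_neq V E s d q1 q2 HG) (@Ed_d V E s d q1 q2 HG)).
have rmle1 : rm t <= r1 t by apply: bigmin_le_id.
have rmle2 i : (i < L)%N -> rm t <= r2 (t - i)%N.
  move=> Hi; apply: le_trans (bigmin_le _ (Ordinal Hi) _) _.
  by rewrite ge_min lexx orbT.
have rpos1 k : 0 < r1 k by rewrite /r1 divr_gt0 // pp.
have rpos2 k : 0 < r2 k by rewrite /r2 divr_gt0 // pp.
have rmpos : 0 < rm t.
  apply: lt_bigmin => //= i _; by rewrite lt_min rpos1 rpos2.
have rmB1 : rm t <= r2 (t - m + 1)%N by rewrite k1; apply: rmle2; rewrite /L /m leq_max leqnn.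
have rmB2 : rm t <= r2 (t - n + 1)%N by rewrite k2; apply: rmle2; rewrite /L /n leq_max leqnn orbT.
rewrite Hf1 /a.
move: rmB1 rmB2 rmle1 rmpos f2ge Pilt Pi1ge Pi2ge.
rewrite /r2 /r1 !Bd.
have := pp t s s1 Es1; have := pp t s s2 Es2.
have := pp (t - m + 1)%N d1 d Ed1; have := pp (t - m + 1)%N d2 d Ed2.
have := pp (t - n + 1)%N d1 d Ed1; have := pp (t - n + 1)%N d2 d Ed2.
case/andP: Hdel => Hd0 _.
move: Hb Hd0.
set a1 := pher (T (t - m + 1)%N) d1 d.
set a2 := pher (T (t - m + 1)%N) d2 d.
set c1 := pher (T (t - n + 1)%N) d1 d.
set c2 := pher (T (t - n + 1)%N) d2 d.
set p1 := pher (T t) s s1.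
set p2 := pher (T t) s s2.
set f2 := fedge E (T t) s s2.
set Pi1 := \prod_(v <- q1) (1 - l v).
set Pi2 := \prod_(v <- q2) (1 - l v).
set r := rm t.
clearbody a1 a2 c1 c2 p1 p2 f2 Pi1 Pi2 r.
exact: alg.
Qed.
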